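(* Let $\Delta$ be a smooth convex polygon with more than four edges. (i) If $e$ and $e'$ are parallel edges, then there is an edge, different from $e$ and $e'$ and not adjacent to $e$, which can be blown down. (ii) If $e,e',e''$ are consecutive adjacent edges with outward conormals $\alpha,\alpha',\alpha''$, and $\alpha'$ is not a positive linear combination of $\alpha$ and $\alpha''$, then there is an edge different from $e,e',e''$ which can be blown down.
   Context: A smooth polygon is a convex polygon $\bigcap_i\{x\in(\mathbb R^2)^*\mid\langle\eta_i,x\rangle\le\kappa_i\}$ whose primitive outward conormals at each vertex form a basis of $\mathbb Z^2$. An edge can be blown down if the polygon is the blowup of a smooth polygon at a vertex with that edge as exceptional divisor; for smooth polygons this holds exactly when the outward conormal of the edge equals the sum of the outward conormals of the two adjacent edges. (Blowup at a vertex $F_1\cap F_2$: intersect with $\{\langle\eta_1+\eta_2,x\rangle\le\kappa_1+\kappa_2-\epsilon\}$, $\epsilon>0$ small.) *)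

(* Defs.v *)
(* polygons live in (R^2)^* = R * R for R : realType. *)
From HB Require Import structures.
From mathcomp Require Import all_boot all_order all_algebra.
From mathcomp Require Import reals.
Set Implicit Arguments. Unset Strict Implicit. Unset Printing Implicit Defensive.
Import Order.TTheory GRing.Theory Num.Theory.
Local Open Scope ring_scope.

Definition zvadd (u v : int * int) : int * int := (u.1 + v.1, u.2 + v.2).

Definition primitive (v : int * int) : Prop :=
  forall (k : int) (w : int * int), v = (k * w.1, k * w.2) -> k = 1 \/ k = -1.

Definition Zbasis (u v : int * int) : Prop :=
  forall z : int * int, exists! c : int * int,
    z = (c.1 * u.1 + c.2 * v.1, c.1 * u.2 + c.2 * v.2).

Section Polygons.
Variable R : realType.

Definition pairing (eta : int * int) (x : R * R) : R :=
  eta.1%:~R * x.1 + eta.2%:~R * x.2.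

Definition in_poly n (eta : 'I_n -> int * int) (kappa : 'I_n -> R) (x : R * R) : Prop :=
  forall i, pairing (eta i) x <= kappa i.

Definition facet n (eta : 'I_n -> int * int) (kappa : 'I_n -> R) (i : 'I_n) (x : R * R) : Prop :=
  in_poly eta kappa x /\ pairing (eta i) x = kappa i.

Definition bounded_poly n (eta : 'I_n -> int * int) (kappa : 'I_n -> R) : Prop :=
  exists M : R, forall x, in_poly eta kappa x -> `|x.1| <= M /\ `|x.2| <= M.

(* (n, eta, kappa) presents a smooth convex polygon whose edges are exactly
   the facets F_0, ..., F_{n-1}:
   - the conormals are pairwise distinct and primitive,
   - Delta is bounded (a convex polygon),
   - every facet F_i is a genuine edge (contains two distinct points),
   - at every vertex F_i \cap F_j (i <> j) the conormals form a Z-basis. *)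
Definition smooth_polygon n (eta : 'I_n -> int * int) (kappa : 'I_n -> R) : Prop :=
  [/\ injective eta,
      (forall i, primitive (eta i)),
      bounded_poly eta kappa,
      (forall i, exists x y, [/\ facet eta kappa i x, facet eta kappa i y & x <> y]) &
      (forall i j, i <> j -> (exists x, facet eta kappa i x /\ facet eta kappa j x) ->
         Zbasis (eta i) (eta j))].

Definition adjacent n (eta : 'I_n -> int * int) (kappa : 'I_n -> R) (i j : 'I_n) : Prop :=
  i <> j /\ exists x, facet eta kappa i x /\ facet eta kappa j x.

Definition parallel_edges n (eta : 'I_n -> int * int) (kappa : 'I_n -> R) (i j : 'I_n) : Prop :=
  i <> j /\ exists x y u w,
    [/\ [/\ facet eta kappa i x, facet eta kappa i y & x <> y],
        [/\ facet eta kappa j u, facet eta kappa j w & u <> w] &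
        (y.1 - x.1) * (w.2 - u.2) - (y.2 - x.2) * (w.1 - u.1) = 0].

(* Edge e of Delta can be blown down: Delta is the blowup of a smooth polygon
   Delta' at a vertex F'_a \cap F'_b, i.e.
   Delta = Delta' \cap { <eta'_a + eta'_b, x> <= kappa'_a + kappa'_b - eps },
   eps > 0 small (so that all edges of Delta' survive: Delta has exactly one
   more edge than Delta'), with e being the new (exceptional) edge. *)
Definition can_blow_down n (eta : 'I_n -> int * int) (kappa : 'I_n -> R) (e : 'I_n) : Prop :=
  exists (n' : nat) (eta' : 'I_n' -> int * int) (kappa' : 'I_n' -> R)
         (a b : 'I_n') (eps : R),
    [/\ [/\ smooth_polygon eta' kappa', adjacent eta' kappa' a b, 0 < eps & n = n'.+1],
        (forall x, in_poly eta kappa x <->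
           (in_poly eta' kappa' x /\
            pairing (zvadd (eta' a) (eta' b)) x <= kappa' a + kappa' b - eps)) &
        (forall x, facet eta kappa e x <->
           (in_poly eta kappa x /\
            pairing (zvadd (eta' a) (eta' b)) x = kappa' a + kappa' b - eps))].

Definition pos_comb (v u w : int * int) : Prop :=
  exists a b : R, [/\ 0 < a, 0 < b,
    v.1%:~R = a * u.1%:~R + b * w.1%:~R & v.2%:~R = a * u.2%:~R + b * w.2%:~R].

End Polygons.

(* Main.v *)
Require Import Defs.
From HB Require Import structures.
From mathcomp Require Import all_boot all_order all_algebra.
From mathcomp Require Import reals.
From mathcomp Require Import zify ring lra.
Import Order.TTheory GRing.Theory Num.Theory.
Local Open Scope ring_scope.

Definition det (u v : int * int) : int := u.1 * v.2 - u.2 * v.1.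

Lemma unit_int (x y : int) : x * y = 1 -> y = 1 \/ y = -1.
Proof. move/intUnitRing.unitzPl. rewrite qualifE /=. by case/orP=>/eqP->; auto. Qed.

Lemma Zbasis_det u v : Zbasis u v -> det u v = 1 \/ det u v = -1.
Proof.
move=> H; case: (H (1,0)) => [[c1 c2] [Hc _]]; case: (H (0,1)) => [[d1 d2] [Hd _]].
case: Hc => /= h1 h2; case: Hd => /= h3 h4.
apply: (@unit_int (c1 * d2 - c2 * d1)).
have E : (c1 * u.1 + c2 * v.1) * (d1 * u.2 + d2 * v.2) - (c1 * u.2 + c2 * v.2) * (d1 * u.1 + d2 * v.1)
   = (c1 * d2 - c2 * d1) * det u v by rewrite /det; ring.
by rewrite -E -h1 -h2 -h3 -h4; ring.
Qed.

Lemma det_Zbasis u v : det u v = 1 \/ det u v = -1 -> Zbasis u v.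
Proof.
move=> hD z; set D := det u v.
have DD : D * D = 1 by rewrite /D; case: hD => ->.
exists (D * det z v, D * det u z); split.
  case: z => z1 z2 /=; congr pair.
    have -> : D * det (z1, z2) v * u.1 + D * det u (z1, z2) * v.1 = (D * D) * z1
      by rewrite /D /det /=; ring.
    by rewrite DD mul1r.
  have -> : D * det (z1, z2) v * u.2 + D * det u (z1, z2) * v.2 = (D * D) * z2
    by rewrite /D /det /=; ring.
  by rewrite DD mul1r.
move=> [c1 c2] /= Hz; rewrite Hz; congr pair.
  have -> : D * det (c1 * u.1 + c2 * v.1, c1 * u.2 + c2 * v.2) v = (D * D) * c1
    by rewrite /D /det /=; ring.
  by rewrite DD mul1r.
have -> : D * det u (c1 * u.1 + c2 * v.1, c1 * u.2 + c2 * v.2) = (D * D) * c2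
  by rewrite /D /det /=; ring.
by rewrite DD mul1r.
Qed.

Lemma prim_neq0 v : primitive v -> v <> (0, 0).
Proof. move=> H E; case: (H 0 (0,0)); first by rewrite E /= mul0r. all: by []. Qed.

Lemma cramer u v w : det u v = 1 ->
  w = (det w v * u.1 + det u w * v.1, det w v * u.2 + det u w * v.2).
Proof.
move=> h; case: w => w1 w2; congr pair.
  have -> : det (w1, w2) v * u.1 + det u (w1, w2) * v.1 = det u v * w1 by rewrite /det /=; ring.
  by rewrite h mul1r.
have -> : det (w1, w2) v * u.2 + det u (w1, w2) * v.2 = det u v * w2 by rewrite /det /=; ring.
by rewrite h mul1r.
Qed.

Lemma prim_mult v w (q : int) : primitive v -> v = (q * w.1, q * w.2) -> 0 < q -> q = 1.
Proof. move=> H E q0; case: (H q w E) => // qm; move: q0; rewrite qm; lia. Qed.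
Arguments cramer {u v} w.
Arguments prim_neq0 {v}.
Arguments prim_mult {v} w {q}.
Arguments Zbasis_det {u v}.
Arguments det_Zbasis {u v}.

Lemma detC u v : det u v = - det v u.
Proof. rewrite /det; ring. Qed.

Lemma det_self u : det u u = 0.
Proof. rewrite /det; ring. Qed.

Lemma norm_le (R : realType) (a M : R) : `|a| <= M -> - M <= a /\ a <= M.
Proof. by rewrite ler_norml => /andP. Qed.

Lemma bound_contra (R : realType) (M x c : R) : 0 <= M -> - M <= x -> x <= M ->
  - M <= x + (3 * M + 1) * c -> x + (3 * M + 1) * c <= M -> (1 <= c \/ c <= -1) -> False.
Proof.
move=> h1 h2 h2' h3 h4 [h5|h5].
  have : 0 <= (3 * M + 1) * (c - 1) by apply: mulr_ge0; lra.
  nra.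
have : 0 <= (3 * M + 1) * (- 1 - c) by apply: mulr_ge0; lra.
nra.
Qed.

Arguments bound_contra {R M x c}.

Section Geo.
Variables (R : realType) (n : nat) (eta : 'I_n -> int * int) (kappa : 'I_n -> R).
Hypothesis Hs : smooth_polygon eta kappa.

Local Notation dd i j := (det (eta i) (eta j)).

Lemma pts_eq (u v : int * int) (y y' : R * R) : det u v != 0 ->
  pairing u y = pairing u y' -> pairing v y = pairing v y' -> y = y'.
Proof.
move=> hD h1 h2.
have hD' : (det u v)%:~R != 0 :> R by rewrite intr_eq0.
have e1 : (det u v)%:~R * (y.1 - y'.1) = v.2%:~R * (pairing u y - pairing u y')
            - u.2%:~R * (pairing v y - pairing v y') :> R.
  by rewrite /pairing /det intrB !intrM; ring.
have e2 : (det u v)%:~R * (y.2 - y'.2) = u.1%:~R * (pairing v y - pairing v y')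
            - v.1%:~R * (pairing u y - pairing u y') :> R.
  by rewrite /pairing /det intrB !intrM; ring.
rewrite h1 h2 !subrr !mulr0 subrr in e1 e2.
move/eqP: e1; rewrite mulf_eq0 (negbTE hD') /= subr_eq0 => /eqP a1.
move/eqP: e2; rewrite mulf_eq0 (negbTE hD') /= subr_eq0 => /eqP a2.
clear h1 h2; move: a1 a2; case: y => ? ?; by case: y' => ? ? /= -> ->.
Qed.

Lemma cone_free i j k x : facet eta kappa i x -> facet eta kappa j x ->
  0 < dd i j -> 0 < dd i k -> 0 < dd k j -> False.
Proof.
case: Hs => _ _ _ Hgen _.
move=> [Hx Hxi] [_ Hxj] Dij Dik Dkj.
case: (Hgen k) => y [y' [[Hy Hyk] [Hy' Hy'k] Hne]].
have lin z : (dd i j)%:~R * pairing (eta k) z =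
   (dd k j)%:~R * pairing (eta i) z + (dd i k)%:~R * pairing (eta j) z :> R.
  by rewrite /pairing /det !intrB !intrM; ring.
have A0 : (0 : R) < (dd i j)%:~R by rewrite ltr0z.
have B0 : (0 : R) < (dd k j)%:~R by rewrite ltr0z.
have C0 : (0 : R) < (dd i k)%:~R by rewrite ltr0z.
have tight z : in_poly eta kappa z -> pairing (eta k) z = kappa k ->
    pairing (eta i) z = kappa i /\ pairing (eta j) z = kappa j.
  move=> Hz Hzk.
  have L1 := lin z; have L2 := lin x.
  rewrite Hxi Hxj Hzk in L1 L2.
  have := Hz i; have := Hz j; have := Hx k.
  move: A0 B0 C0 L1 L2.
  set a := (dd i j)%:~R; set b := (dd k j)%:~R; set c := (dd i k)%:~R.
  set pk := pairing (eta k) x; set zi := pairing (eta i) z; set zj := pairing (eta j) z.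
  move=> *; split; nra.
have [t1 t2] := tight y Hy Hyk; have [t3 t4] := tight y' Hy' Hy'k.
apply: Hne; apply: (@pts_eq (eta i) (eta j)).
- by rewrite gt_eqF.
- by rewrite t1 t3.
- by rewrite t2 t4.
Qed.
Arguments cone_free [i j k x].

Lemma dir_ex i (s : int) : (s = 1 \/ s = -1) ->
  exists j, adjacent eta kappa i j /\ s * dd i j = 1.
Proof.
case: Hs => Hinj Hprim [M HM] Hgen Hzb hs.
case: (Hgen i) => x [_ [[Hx Hxi] _ _]].
pose d : R * R := ((s * - (eta i).2)%:~R, (s * (eta i).1)%:~R).
have Pd k (t : R) : pairing (eta k) (x.1 + t * d.1, x.2 + t * d.2) =
      pairing (eta k) x + t * (s * dd i k)%:~R.
  by rewrite /pairing /det /d /= !intrM !intrB !intrM intrN; ring.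
have M0 : 0 <= M.
  by case: (HM x Hx) => h1 _; exact: le_trans (normr_ge0 _) h1.
have [Hex|Hnex] := boolP [exists j, 0 < s * dd i j]; last first.
  exfalso.
  have Hall k : s * dd i k <= 0.
    move/negP: Hnex => Hnex; rewrite leNgt; apply/negP => h; apply: Hnex.
    by apply/existsP; exists k.
  pose t : R := 3 * M + 1.
  have t0 : 0 <= t by rewrite /t; lra.
  have Hz : in_poly eta kappa (x.1 + t * d.1, x.2 + t * d.2).
    move=> k; rewrite Pd.
    have : (s * dd i k)%:~R <= 0 :> R by rewrite lerz0 Hall.
    have := Hx k; move=> *; nra.
  case: (HM _ Hz) => /= /norm_le [z1 z2] /norm_le [z3 z4].
  case: (HM _ Hx) => /norm_le [x1 x2] /norm_le [x3 x4].
  rewrite /t in z1 z2 z3 z4.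
  have hne : eta i <> (0,0) := prim_neq0 (Hprim i).
  have hs' : s * s = 1 by case: hs => ->.
  have [h2|h2] : (eta i).2 != 0 \/ (eta i).1 != 0.
    case: (eta i) hne => a b /=; case: (eqVneq b 0) => [->|]; last by left.
    by case: (eqVneq a 0) => [->|]; [|right].
  - apply: (bound_contra M0 x1 x2 z1 z2).
    have : (1 <= s * - (eta i).2) || (s * - (eta i).2 <= -1).
      case: hs h2 => -> h2; lia.
    by case/orP => hd; [left; rewrite ler1z | right; rewrite -(ler_int R) in hd].
  - apply: (bound_contra M0 x3 x4 z3 z4).
    have : (1 <= s * (eta i).1) || (s * (eta i).1 <= -1).
      case: hs h2 => -> h2; lia.
    by case/orP => hd; [left; rewrite ler1z | right; rewrite -(ler_int R) in hd].
case/existsP: Hex => j0 Hj0.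
pose r k : R := (kappa k - pairing (eta k) x) / (s * dd i k)%:~R.
case: (@arg_minP _ R _ j0 (fun k => 0 < s * dd i k) r Hj0) => j Pj Hmin.
set T := r j.
have cj : (0 : R) < (s * dd i j)%:~R by rewrite ltr0z.
have T0 : 0 <= T by rewrite /T /r divr_ge0 ?subr_ge0 ?(Hx j) // ltW.
have HrK k : 0 < s * dd i k -> r k * (s * dd i k)%:~R = kappa k - pairing (eta k) x.
  by move=> hk; rewrite /r divfK // gt_eqF // ltr0z.
have Hz : in_poly eta kappa (x.1 + T * d.1, x.2 + T * d.2).
  move=> k; rewrite Pd.
  have [hk|hk] := boolP (0 < s * dd i k).
    have := Hmin k hk; rewrite -/T => hT.
    have := HrK k hk.
    have ck : (0 : R) < (s * dd i k)%:~R by rewrite ltr0z.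
    move=> *; nra.
  have : (s * dd i k)%:~R <= 0 :> R by rewrite lerz0 leNgt.
  have := Hx k; move=> *; nra.
have Fi : facet eta kappa i (x.1 + T * d.1, x.2 + T * d.2).
  by split=> //; rewrite Pd det_self mulr0 mulr0 addr0.
have Fj : facet eta kappa j (x.1 + T * d.1, x.2 + T * d.2).
  split=> //; rewrite Pd /T HrK //; ring.
have ij : i <> j by move=> E; move: Pj; rewrite -E det_self mulr0.
exists j; split; first by split=> //; exists (x.1 + T * d.1, x.2 + T * d.2).
have := Zbasis_det (Hzb i j ij (ex_intro _ _ (conj Fi Fj))).
move: Pj; case: hs => -> Pj0; case=> E; rewrite E in Pj0 *; lia.
Qed.

Lemma adj_sym i j : adjacent eta kappa i j -> adjacent eta kappa j i.
Proof. by case=> h [x [h1 h2]]; split; [move=> E; apply: h|exists x]. Qed.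

Arguments adj_sym [i j].

Lemma adj_det i j : adjacent eta kappa i j -> dd i j = 1 \/ dd i j = -1.
Proof. case: Hs => _ _ _ _ Hzb [h hx]; exact: Zbasis_det (Hzb i j h hx). Qed.

Arguments adj_det [i j].

Lemma next_ex i : exists j, adjacent eta kappa i j /\ dd i j = 1.
Proof. by case: (dir_ex i 1 (or_introl erefl)) => j [h1 h2]; exists j; rewrite mul1r in h2. Qed.

Lemma prev_ex i : exists j, adjacent eta kappa j i /\ dd j i = 1.
Proof.
case: (dir_ex i (-1) (or_intror erefl)) => j [h1 h2]; exists j; split; first exact: adj_sym.
by rewrite detC; rewrite mulN1r in h2.
Qed.

Lemma eta_inj i j : eta i = eta j -> i = j.
Proof. by case: Hs => Hinj *; apply: Hinj. Qed.

Lemma next_uniq i j j' : adjacent eta kappa i j -> adjacent eta kappa i j' ->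
  dd i j = 1 -> dd i j' = 1 -> j = j'.
Proof.
move=> [_ [x [Hxi Hxj]]] [_ [y [Hyi Hyj']]] h1 h2.
have [hp|[hn|h0]] : 0 < dd j j' \/ dd j j' < 0 \/ dd j j' = 0 by lia.
- exfalso; apply: (cone_free Hyi Hyj' _ _ hp); rewrite ?h1 ?h2 //.
- exfalso; apply: (cone_free Hxi Hxj _ _ (k := j')); rewrite ?h1 ?h2 //.
  by rewrite detC; lia.
- apply: eta_inj; have Ej' := cramer (eta j') h1; have Ej := cramer (eta j) h1.
  have h0' : det (eta j') (eta j) = 0 by rewrite detC h0.
  rewrite det_self h1 in Ej; rewrite h2 h0' in Ej'.
  by clear Ej; move: Ej'; case: (eta j) => a b /= ->; congr pair; ring.
Qed.

Arguments next_uniq [i j j'].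

Lemma prev_uniq i j j' : adjacent eta kappa j i -> adjacent eta kappa j' i ->
  dd j i = 1 -> dd j' i = 1 -> j = j'.
Proof.
move=> [_ [x [Hxj Hxi]]] [_ [y [Hyj' Hyi]]] h1 h2.
have [hp|[hn|h0]] : 0 < dd j j' \/ dd j j' < 0 \/ dd j j' = 0 by lia.
- exfalso; apply: (cone_free Hxj Hxi _ hp); rewrite ?h1 ?h2 //.
- exfalso; apply: (cone_free Hyj' Hyi (k := j)); rewrite ?h1 ?h2 //.
  by rewrite detC; lia.
- apply: eta_inj; have Ej' := cramer (eta j') h1; have Ej := cramer (eta j) h1.
  rewrite det_self h1 in Ej; rewrite h2 h0 in Ej'.
  by clear Ej; move: Ej'; case: (eta j) => a b /= ->; congr pair; ring.
Qed.

Arguments prev_uniq [i j j'].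

End Geo.

Arguments cone_free {R n eta kappa} Hs [i j k x].
Arguments dir_ex {R n eta kappa} Hs i s.
Arguments adj_sym {R n eta kappa} [i j].
Arguments adj_det {R n eta kappa} Hs [i j].
Arguments next_ex {R n eta kappa} Hs i.
Arguments prev_ex {R n eta kappa} Hs i.
Arguments eta_inj {R n eta kappa} Hs [i j].
Arguments next_uniq {R n eta kappa} Hs [i j j'].
Arguments prev_uniq {R n eta kappa} Hs [i j j'].
Arguments pts_eq {R} [u v y y'].

Lemma key_arith (R : realType) (a b s t kP kN kf kk : R) : (a < 0 \/ b < 0) ->
  s <= kP -> t <= kN -> kf < s + t ->
  a * kP + b * (kf - kP) <= kk -> a * (kf - kN) + b * kN <= kk -> a * s + b * t < kk.
Proof.
move=> hab hs ht hst hp hq.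
have [a0|a0] := lerP 0 a; have [b0|b0] := lerP 0 b.
- by exfalso; case: hab => h; lra.
- have h1 : a * s <= a * kP by nra.
  have h2 : b * t < b * (kf - kP) by nra.
  lra.
- have h1 : b * t <= b * kN by nra.
  have h2 : a * s < a * (kf - kN) by nra.
  lra.
- have [ab|ab] := lerP a b.
  + have h1 : 0 <= (b - a) * (kN - t) by apply: mulr_ge0; lra.
    have h2 : 0 < a * (s + t - kf) * (-1) by nra.
    nra.
  + have h1 : 0 <= (a - b) * (kP - s) by apply: mulr_ge0; lra.
    have h2 : 0 < b * (s + t - kf) * (-1) by nra.
    nra.
Qed.

Lemma abs_bnd3 (R : realType) (s a b c : R) : a - c < s -> s <= b ->
  `|s| <= `|b| + `|c| + `|a|.
Proof.
move=> h1 h2.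
have e1 : b <= `|b| := ler_norm b.
have e2 : c <= `|c| := ler_norm c.
have e3 : - `|a| <= a by rewrite lerNl -normrN ler_norm.
have e4 : 0 <= `|c| := normr_ge0 c.
have e5 : 0 <= `|b| := normr_ge0 b.
have e6 : 0 <= `|a| := normr_ge0 a.
have g1 : - (`|b| + `|c| + `|a|) <= s :> R by lra.
have g2 : s <= `|b| + `|c| + `|a| :> R by lra.
by rewrite ler_norml g1 g2.
Qed.

Lemma bnd2 (R : realType) (c1 c2 s t S : R) : `|s| <= S -> `|t| <= S ->
  `|c1 * s - c2 * t| <= (`|c1| + `|c2|) * S.
Proof.
move=> hs ht.
apply: (le_trans (ler_normB _ _)); rewrite !normrM mulrDl.
apply: lerD; apply: ler_wpM2l => //; exact: normr_ge0.
Qed.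

Lemma pairing_add (R : realType) u v w (x : R * R) : w = zvadd u v ->
  pairing w x = pairing u x + pairing v x.
Proof. move=> ->; rewrite /pairing /zvadd /= !intrD; ring. Qed.

Lemma pairing_comb (R : realType) (a b : int) u v w (x : R * R) :
  w = (a * u.1 + b * v.1, a * u.2 + b * v.2) ->
  pairing w x = a%:~R * pairing u x + b%:~R * pairing v x.
Proof. move=> ->; rewrite /pairing /= !intrD !intrM; ring. Qed.

Section Blow.
Variables (R : realType) (n : nat) (eta : 'I_n -> int * int) (kappa : 'I_n -> R).
Hypothesis Hs : smooth_polygon eta kappa.
Local Notation dd i j := (det (eta i) (eta j)).

Lemma blow f P N : adjacent eta kappa P f -> adjacent eta kappa f N ->
  dd P f = 1 -> dd f N = 1 -> dd P N = 1 -> can_blow_down eta kappa f.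
Proof.
move=> [_ [p [HpP Hpf]]] [_ [q [Hqf HqN]]] hPf hfN hPN.
have Hs' := Hs; case: Hs' => Hinj Hprim [M HM] Hgen Hzb.
have etaf : eta f = zvadd (eta P) (eta N).
  have := cramer (eta N) hPf; rewrite hPN (detC (eta N)) hfN /zvadd.
  by move: (eta f) (eta P) (eta N) => [a b] [c d] [e g] /= [-> ->]; congr pair; ring.
have pf x : pairing (eta f) x = pairing (eta P) x + pairing (eta N) x :> R.
  exact: pairing_add.
have Pf : P != f by apply/eqP => E; move: hPf; rewrite E det_self.
have Nf : N != f by apply/eqP => E; move: hfN; rewrite E det_self.
have PN : P != N by apply/eqP => E; move: hPN; rewrite E det_self.
have nocone k : k != P -> k != N -> k != f -> dd k N < 0 \/ dd P k < 0.
  move=> kP kN kf.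
  have Ek := cramer (eta k) hPN.
  have dkf : dd k f = dd k N - dd P k by rewrite etaf /det /zvadd /=; ring.
  have dfk : dd f k = dd P k - dd k N by rewrite etaf /det /zvadd /=; ring.
  case: (ltrP (dd k N) 0) => a0; first by left.
  case: (ltrP (dd P k) 0) => b0; first by right.
  exfalso.
  have knz := prim_neq0 (Hprim k).
  have [b00|bpos] : dd P k = 0 \/ 0 < dd P k by lia.
    rewrite b00 !mul0r !addr0 in Ek.
    have apos : 0 < dd k N.
      case: (ltrP 0 (dd k N)) => // h; have h0 : dd k N = 0 by lia.
      by exfalso; apply: knz; rewrite Ek h0 !mul0r.
    have a1 := prim_mult (eta P) (Hprim k) Ek apos.
    rewrite a1 !mul1r in Ek.
    by move/eqP: kP; apply; apply: (eta_inj Hs); rewrite Ek; case: (eta P).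
  have [a00|apos] : dd k N = 0 \/ 0 < dd k N by lia.
    rewrite a00 !mul0r !add0r in Ek.
    have b1 := prim_mult (eta N) (Hprim k) Ek bpos.
    rewrite b1 !mul1r in Ek.
    by move/eqP: kN; apply; apply: (eta_inj Hs); rewrite Ek; case: (eta N).
  have [h|[h|h]] : dd P k < dd k N \/ dd k N < dd P k \/ dd k N = dd P k by lia.
  - by apply: (cone_free Hs HpP Hpf (k := k)); rewrite ?hPf ?dkf; lia.
  - by apply: (cone_free Hs Hqf HqN (k := k)); rewrite ?hfN ?dfk; lia.
  - have Ek' : eta k = (dd k N * (eta f).1, dd k N * (eta f).2).
      by rewrite {1}Ek etaf -h /zvadd /=; congr pair; ring.
    have a1 := prim_mult (eta f) (Hprim k) Ek' apos.
    rewrite a1 !mul1r in Ek'.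
    by move/eqP: kf; apply; apply: (eta_inj Hs); rewrite Ek'; case: (eta f).
have pNp : pairing (eta N) p = kappa f - kappa P.
  have := pf p; rewrite Hpf.2 HpP.2 => ->; ring.
have pPq : pairing (eta P) q = kappa f - kappa N.
  have := pf q; rewrite Hqf.2 HqN.2 => ->; ring.
have key k (x : R * R) : k != P -> k != N -> k != f ->
    pairing (eta P) x <= kappa P -> pairing (eta N) x <= kappa N ->
    kappa f < pairing (eta P) x + pairing (eta N) x -> pairing (eta k) x < kappa k.
  move=> kP kN kf h1 h2 h3.
  have Ek := cramer (eta k) hPN.
  have lin y : pairing (eta k) y = (dd k N)%:~R * pairing (eta P) y
                                    + (dd P k)%:~R * pairing (eta N) y :> R.
    exact: pairing_comb.
  have hp' := HpP.1 k; rewrite lin pNp HpP.2 in hp'.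
  have hq' := HqN.1 k; rewrite lin pPq HqN.2 in hq'.
  rewrite lin; apply: key_arith h1 h2 h3 hp' hq'.
  by case: (nocone k kP kN kf) => h; [left|right]; rewrite ltrz0.
have le_f : kappa f <= kappa P + kappa N.
  have := HpP.1 N; rewrite pNp; lra.
have eps0 : 0 < kappa P + kappa N - kappa f.
  rewrite subr_gt0 lt_neqAle le_f andbT; apply/eqP => E.
  case: (Hgen f) => y [y' [[Hy Hyf] [Hy' Hy'f] Hne]].
  have tight z : in_poly eta kappa z -> pairing (eta f) z = kappa f ->
      pairing (eta P) z = kappa P /\ pairing (eta N) z = kappa N.
    move=> Hz Hzf; have := Hz P; have := Hz N; rewrite pf E in Hzf.
    move=> *; split; lra.
  have [t1 t2] := tight y Hy Hyf; have [t3 t4] := tight y' Hy' Hy'f.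
  apply: Hne; apply: (pts_eq (u := eta P) (v := eta N)); first by rewrite hPN.
    by rewrite t1 t3.
  by rewrite t2 t4.
case: (unliftP f P) => [a Pa|E]; last by rewrite E eqxx in Pf.
case: (unliftP f N) => [b Nb|E]; last by rewrite E eqxx in Nf.
pose eta' := fun j => eta (lift f j).
pose kappa' := fun j => kappa (lift f j).
have inP' x : in_poly eta' kappa' x <-> (forall k, k != f -> pairing (eta k) x <= kappa k).
  split.
    move=> H k kf; case: (unliftP f k) => [j ->|E]; first exact: H.
    by rewrite E eqxx in kf.
  by move=> H j; apply: H; rewrite eq_sym neq_lift.
have inD x : in_poly eta kappa x <-> (in_poly eta' kappa' x /\ pairing (eta f) x <= kappa f).
  rewrite inP'; split.
    by move=> H; split => // k _; apply: H.
  move=> [H1 H2] k; case: (eqVneq k f) => [->|kf] //; exact: H1.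
have HD : injective eta' by move=> u v /Hinj /lift_inj.
exists n.-1, eta', kappa', a, b, (kappa P + kappa N - kappa f).
have -> : zvadd (eta' a) (eta' b) = eta f by rewrite /eta' -Pa -Nb etaf.
have -> : kappa' a + kappa' b - (kappa P + kappa N - kappa f) = kappa f.
  by rewrite /kappa' -Pa -Nb; ring.
split; [| by move=> x; apply: inD | by move=> x; split; case].
split; [ | | exact: eps0 | by rewrite prednK // (leq_ltn_trans (leq0n _) (ltn_ord f))]; last first.
  split; first by move=> E; move/eqP: PN; apply; rewrite Pa Nb E.
  pose r : R * R := (kappa P * (eta N).2%:~R - kappa N * (eta P).2%:~R,
                     kappa N * (eta P).1%:~R - kappa P * (eta N).1%:~R).
  have hD : ((eta P).1%:~R * (eta N).2%:~R - (eta P).2%:~R * (eta N).1%:~R : R) = 1.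
    by have := hPN; rewrite /det => /(congr1 (fun z : int => z%:~R : R)); rewrite intrB !intrM.
  have rP : pairing (eta P) r = kappa P.
    have -> : pairing (eta P) r = kappa P * ((eta P).1%:~R * (eta N).2%:~R - (eta P).2%:~R * (eta N).1%:~R)
      by rewrite /pairing /r /=; ring.
    by rewrite hD mulr1.
  have rN : pairing (eta N) r = kappa N.
    have -> : pairing (eta N) r = kappa N * ((eta P).1%:~R * (eta N).2%:~R - (eta P).2%:~R * (eta N).1%:~R)
      by rewrite /pairing /r /=; ring.
    by rewrite hD mulr1.
  have rin : in_poly eta' kappa' r.
    apply/inP' => k kf.
    case: (eqVneq k P) => [->|kP]; first by rewrite rP.
    case: (eqVneq k N) => [->|kN]; first by rewrite rN.
    apply: ltW; apply: key => //; rewrite ?rP ?rN //; lra.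
  exists r; rewrite /facet /eta' /kappa' -Pa -Nb; split; split => //.
split => //.
- by move=> j; apply: Hprim.
- pose S := `|kappa P| + `|kappa N| + `|kappa f|.
  pose K := `|((eta P).1%:~R : R)| + `|((eta P).2%:~R : R)| + `|((eta N).1%:~R : R)| + `|((eta N).2%:~R : R)|.
  have S0 : 0 <= S by rewrite /S; have := normr_ge0 (kappa P); have := normr_ge0 (kappa N); have := normr_ge0 (kappa f); lra.
  have K0 : 0 <= K.
    rewrite /K; have := normr_ge0 ((eta P).1%:~R : R); have := normr_ge0 ((eta P).2%:~R : R).
    have := normr_ge0 ((eta N).1%:~R : R); have := normr_ge0 ((eta N).2%:~R : R); lra.
  have KS0 : 0 <= K * S by apply: mulr_ge0.
  have Mm : M <= Num.max M 0 by rewrite le_max lexx.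
  exists (Num.max M 0 + K * S) => x Hx.
  have [Hxf|Hxf] := lerP (pairing (eta f) x) (kappa f).
    have [h1 h2] := HM x ((inD x).2 (conj Hx Hxf)).
    split; lra.
  have Hx' := (inP' x).1 Hx.
  have hs := Hx' P Pf; have ht := Hx' N Nf.
  rewrite pf in Hxf.
  have hD : ((eta P).1%:~R * (eta N).2%:~R - (eta P).2%:~R * (eta N).1%:~R : R) = 1.
    by have := hPN; rewrite /det => /(congr1 (fun z : int => z%:~R : R)); rewrite intrB !intrM.
  have bs : `|pairing (eta P) x| <= S.
    apply: (le_trans (@abs_bnd3 R _ (kappa f) _ (kappa N) _ hs)); first by lra.
    by rewrite /S; lra.
  have bt : `|pairing (eta N) x| <= S.
    apply: (le_trans (@abs_bnd3 R _ (kappa f) _ (kappa P) _ ht)); first by lra.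
    by rewrite /S; lra.
  have ex1 : (eta N).2%:~R * pairing (eta P) x - (eta P).2%:~R * pairing (eta N) x = x.1.
    have -> : (eta N).2%:~R * pairing (eta P) x - (eta P).2%:~R * pairing (eta N) x =
      ((eta P).1%:~R * (eta N).2%:~R - (eta P).2%:~R * (eta N).1%:~R) * x.1 :> R
      by rewrite /pairing; ring.
    by rewrite hD mul1r.
  have ex2 : (eta P).1%:~R * pairing (eta N) x - (eta N).1%:~R * pairing (eta P) x = x.2.
    have -> : (eta P).1%:~R * pairing (eta N) x - (eta N).1%:~R * pairing (eta P) x =
      ((eta P).1%:~R * (eta N).2%:~R - (eta P).2%:~R * (eta N).1%:~R) * x.2 :> R
      by rewrite /pairing; ring.
    by rewrite hD mul1r.
  have b1 := @bnd2 R ((eta N).2%:~R : R) ((eta P).2%:~R : R) _ _ _ bs bt.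
  have b2 := @bnd2 R ((eta P).1%:~R : R) ((eta N).1%:~R : R) _ _ _ bt bs.
  rewrite ex1 in b1; rewrite ex2 in b2.
  have k1 : (`|((eta N).2%:~R : R)| + `|((eta P).2%:~R : R)|) * S <= K * S.
    apply: ler_wpM2r => //; rewrite /K.
    have := normr_ge0 ((eta P).1%:~R : R); have := normr_ge0 ((eta N).1%:~R : R); lra.
  have k2 : (`|((eta P).1%:~R : R)| + `|((eta N).1%:~R : R)|) * S <= K * S.
    apply: ler_wpM2r => //; rewrite /K.
    have := normr_ge0 ((eta P).2%:~R : R); have := normr_ge0 ((eta N).2%:~R : R); lra.
  have m0 : 0 <= Num.max M 0 by rewrite le_max lexx orbT.
  split; lra.
- move=> j; case: (Hgen (lift f j)) => y [y' [[Hy Hyj] [Hy' Hy'j] Hne]].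
  exists y, y'; split => //; split => //; apply/inP' => k _; first [exact: Hy k | exact: Hy' k].
- move=> i j ij [x [[Hx Hxi] [_ Hxj]]].
  have [Hxf|Hxf] := lerP (pairing (eta f) x) (kappa f).
    have HxD := (inD x).2 (conj Hx Hxf).
    apply: Hzb; first by move/lift_inj.
    by exists x; split; split.
  have Hx' := (inP' x).1 Hx.
  rewrite pf in Hxf.
  have mem k : k != f -> pairing (eta k) x = kappa k -> k = P \/ k = N.
    move=> kf hk; case: (eqVneq k P) => [->|kP]; first by left.
    case: (eqVneq k N) => [->|kN]; first by right.
    exfalso; have := key k x kP kN kf (Hx' P Pf) (Hx' N Nf) Hxf.
    by rewrite hk ltxx.
  have nf j' : lift f j' != f by rewrite eq_sym neq_lift.
  have [iP|iN] := mem _ (nf i) Hxi; have [jP|jN] := mem _ (nf j) Hxj.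
  + by exfalso; apply: ij; apply: (@lift_inj _ f); rewrite iP jP.
  + by rewrite /eta' /= iP jN; apply: det_Zbasis; left.
  + by rewrite /eta' /= iN jP; apply: det_Zbasis; right; rewrite detC hPN.
  + by exfalso; apply: ij; apply: (@lift_inj _ f); rewrite iN jN.
Qed.

End Blow.
Arguments blow {R n eta kappa} Hs [f P N].

Arguments cone_free {R n eta kappa} Hs [i j k x].
Arguments adj_sym {R n eta kappa} [i j].
Arguments adj_det {R n eta kappa} Hs [i j].
Arguments next_ex {R n eta kappa} Hs i.
Arguments prev_ex {R n eta kappa} Hs i.
Arguments eta_inj {R n eta kappa} Hs [i j].
Arguments next_uniq {R n eta kappa} Hs [i j j'].
Arguments prev_uniq {R n eta kappa} Hs [i j j'].
Arguments blow {R n eta kappa} Hs [f P N].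

Definition negv (v : int * int) : int * int := (- v.1, - v.2).

Lemma det_negl u v : det (negv u) v = - det u v.
Proof. rewrite /det /negv /=; ring. Qed.
Lemma det_negr u v : det u (negv v) = - det u v.
Proof. rewrite /det /negv /=; ring. Qed.

Lemma coord_det u v w z : det u v = 1 -> det w z = det w v * det u z - det u w * det z v.
Proof.
move=> h; have E : det w z * det u v = det w v * det u z - det u w * det z v
  by rewrite /det; ring.
by rewrite -E h mulr1.
Qed.

Arguments coord_det {u v} w z.

Lemma coord_eq u v w z : det u v = 1 -> det w v = det z v -> det u w = det u z -> w = z.
Proof. move=> h h1 h2; rewrite (cramer w h) (cramer z h) h1 h2 //. Qed.

Lemma same_h a b c d : det a b = 1 -> det c d = 1 -> det a c = det a d ->
  det a d = 1 \/ det a d = -1.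
Proof.
move=> h1 h2 h3.
have E := coord_det c d h1; rewrite h2 h3 in E.
apply: (@unit_int (det c b - det d b)); rewrite E; ring.
Qed.

Lemma rel3 P f N e : det P f = 1 -> det f N = 1 -> det e P + det e N = det P N * det e f.
Proof.
move=> h1 h2.
have E : det P f * det e N = det N f * det e P + det P N * det e f by rewrite /det; ring.
rewrite h1 mul1r (detC N) h2 in E; rewrite E; ring.
Qed.

Lemma ex_not_in n (s : seq 'I_n) : (size s < n)%N -> exists k, k \notin s.
Proof.
move=> hs; case: (pickP (fun k => k \notin s)) => [k hk|H]; first by exists k.
exfalso; have : (#|'I_n| <= size s)%N.
  apply: leq_trans (card_size s); apply: subset_leq_card; apply/subsetP => x _.
  by have := H x; rewrite /= => /negbFE.
by rewrite card_ord leqNgt hs.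
Qed.

Lemma pos_comb_of (R : realType) x y z : det x y = 1 -> det y z = 1 -> 1 <= det x z ->
  pos_comb R y x z /\ pos_comb R y z x.
Proof.
move=> hxy hyz hB.
have Ez := cramer z hxy; rewrite (detC z) hyz in Ez.
set B := det x z in Ez hB.
have B0 : (0 : R) < B%:~R by rewrite ltr0z; lia.
have BN : (B%:~R : R) != 0 by rewrite gt_eqF.
have e1 : (y.1%:~R : R) = (B%:~R)^-1 * x.1%:~R + (B%:~R)^-1 * z.1%:~R.
  have : (z.1%:~R : R) = - x.1%:~R + B%:~R * y.1%:~R.
    by rewrite {1}Ez /= intrD !intrM; ring.
  by move=> ->; field; rewrite ?BN.
have e2 : (y.2%:~R : R) = (B%:~R)^-1 * x.2%:~R + (B%:~R)^-1 * z.2%:~R.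
  have : (z.2%:~R : R) = - x.2%:~R + B%:~R * y.2%:~R.
    by rewrite {1}Ez /= intrD !intrM; ring.
  by move=> ->; field; rewrite ?BN.
have Bi : (0 : R) < (B%:~R)^-1 by rewrite invr_gt0.
split; exists (B%:~R)^-1, (B%:~R)^-1; split => //.
- by rewrite e1 addrC.
- by rewrite e2 addrC.
Qed.

Arguments cone_free {R n eta kappa} Hs [i j k x].
Arguments adj_sym {R n eta kappa} [i j].
Arguments adj_det {R n eta kappa} Hs [i j].
Arguments next_ex {R n eta kappa} Hs i.
Arguments prev_ex {R n eta kappa} Hs i.
Arguments eta_inj {R n eta kappa} Hs [i j].
Arguments next_uniq {R n eta kappa} Hs [i j j'].
Arguments prev_uniq {R n eta kappa} Hs [i j j'].
Arguments blow {R n eta kappa} Hs [f P N].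
Arguments coord_det {u v} w z.
Arguments same_h {a b c d}.
Arguments rel3 {P f N} e.
Arguments coord_eq {u v w z}.
Arguments pos_comb_of {R x y z}.

Lemma par_det_real (R : realType) (i1 i2 j1 j2 a b c d : R) :
  i1 * a + i2 * b = 0 -> j1 * c + j2 * d = 0 -> a * d - b * c = 0 ->
  (a != 0) || (b != 0) -> (c != 0) || (d != 0) -> i1 * j2 - i2 * j1 = 0.
Proof.
move=> E1 E2 X hab hcd.
set D := i1 * j2 - i2 * j1.
have h1 : D * a * c = j2 * c * (i1 * a + i2 * b) - i2 * a * (j1 * c + j2 * d) + i2 * j2 * (a * d - b * c)
  by rewrite /D; ring.
have h2 : D * b * d = i1 * b * (j1 * c + j2 * d) - j1 * d * (i1 * a + i2 * b) + i1 * j1 * (a * d - b * c)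
  by rewrite /D; ring.
have h3 : D * a * d = j2 * d * (i1 * a + i2 * b) - i2 * b * (j1 * c + j2 * d) - i2 * j1 * (a * d - b * c)
  by rewrite /D; ring.
have h4 : D * b * c = - j1 * c * (i1 * a + i2 * b) + i1 * a * (j1 * c + j2 * d) - i1 * j2 * (a * d - b * c)
  by rewrite /D; ring.
rewrite E1 E2 X !mulr0 ?subrr ?addr0 ?add0r ?subr0 ?oppr0 in h1 h2 h3 h4.
have H : D * ((a * a + b * b) * (c * c + d * d)) =
  (D * a * c) * (a * c) + (D * a * d) * (a * d) + (D * b * c) * (b * c) + (D * b * d) * (b * d)
  by ring.
rewrite h1 h2 h3 h4 !mul0r !addr0 in H.
have p1 : 0 < a * a + b * b.
  case/orP: hab => h.
    have : 0 < a * a by rewrite -expr2 exprn_even_gt0.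
    by have := sqr_ge0 b; rewrite expr2; lra.
  have : 0 < b * b by rewrite -expr2 exprn_even_gt0.
  by have := sqr_ge0 a; rewrite expr2; lra.
have p2 : 0 < c * c + d * d.
  case/orP: hcd => h.
    have : 0 < c * c by rewrite -expr2 exprn_even_gt0.
    by have := sqr_ge0 d; rewrite expr2; lra.
  have : 0 < d * d by rewrite -expr2 exprn_even_gt0.
  by have := sqr_ge0 c; rewrite expr2; lra.
move/eqP: H; rewrite mulf_eq0 => /orP [/eqP //|].
by rewrite mulf_eq0 !gt_eqF.
Qed.

Section Comb.
Variables (R : realType) (n : nat) (eta : 'I_n -> int * int) (kappa : 'I_n -> R).
Hypothesis Hs : smooth_polygon eta kappa.
Local Notation dd i j := (det (eta i) (eta j)).

Lemma par_eta e k : dd e k = 0 -> eta k = eta e \/ eta k = negv (eta e).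
Proof.
move=> h; case: (next_ex Hs e) => u [_ hu].
have Ek := cramer (eta k) hu; rewrite h !mul0r !addr0 in Ek.
have Hs' := Hs; case: Hs' => _ Hprim _ _ _.
case: (Hprim k _ _ Ek) => E; rewrite E in Ek; rewrite Ek; [left|right];
  rewrite /negv; case: (eta e) => ? ? /=; congr pair; ring.
Qed.

Arguments par_eta [e k].

Lemma par_det i j x y u w : facet eta kappa i x -> facet eta kappa i y -> x <> y ->
  facet eta kappa j u -> facet eta kappa j w -> u <> w ->
  (y.1 - x.1) * (w.2 - u.2) - (y.2 - x.2) * (w.1 - u.1) = 0 -> dd i j = 0.
Proof.
move=> [_ Hx] [_ Hy] xy [_ Hu] [_ Hw] uw X.
apply/eqP; rewrite -(intr_eq0 R) /det intrB !intrM; apply/eqP.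
apply: (@par_det_real R _ _ _ _ (y.1 - x.1) (y.2 - x.2) (w.1 - u.1) (w.2 - u.2)).
- have : pairing (eta i) y - pairing (eta i) x = 0 by rewrite Hx Hy subrr.
  by rewrite /pairing => <-; ring.
- have : pairing (eta j) w - pairing (eta j) u = 0 by rewrite Hu Hw subrr.
  by rewrite /pairing => <-; ring.
- by rewrite -X; ring.
- case: (eqVneq (y.1 - x.1) 0) => //= h1; case: (eqVneq (y.2 - x.2) 0) => //= h2.
  exfalso; apply: xy; move/eqP: h1; move/eqP: h2; rewrite !subr_eq0.
  by case: x {Hx X} => ? ?; case: y {Hy} => ? ? /= /eqP -> /eqP ->.
- case: (eqVneq (w.1 - u.1) 0) => //= h1; case: (eqVneq (w.2 - u.2) 0) => //= h2.
  exfalso; apply: uw; move/eqP: h1; move/eqP: h2; rewrite !subr_eq0.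
  by case: u {Hu X} => ? ?; case: w {Hw} => ? ? /= /eqP -> /eqP ->.
Qed.

Lemma upper e e' : eta e' = negv (eta e) -> (exists k, 2 <= dd e k) ->
  exists f, [/\ f <> e, f <> e', 2 <= dd e f & can_blow_down eta kappa f].
Proof.
move=> He' [k0 hk0].
case: (@arg_maxP _ int _ e xpredT (fun k => dd e k) erefl) => f _ Hmax.
have Hm j : dd e j <= dd e f := Hmax j erefl.
have M2 : 2 <= dd e f by apply: le_trans hk0 (Hm k0).
case: (prev_ex Hs f) => P [aPf hPf].
case: (next_ex Hs f) => N [afN hfN].
have dee' k : dd e' k = - dd e k by rewrite He' det_negl.
have hN : 1 <= dd e N.
  case: (ltrP 0 (dd e N)) => // hn; exfalso.
  have [hn'|hn'] : dd e N < 0 \/ dd e N = 0 by lia.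
  - case: afN => _ [x [Hxf HxN]].
    apply: (cone_free Hs Hxf HxN (k := e')); first by rewrite hfN.
      by rewrite He' det_negr detC opprK; lia.
    by rewrite dee'; lia.
  - case: (par_eta hn') => E; rewrite E in hfN.
      by move: hfN; rewrite detC; lia.
    by move: hfN; rewrite det_negr detC opprK; lia.
have hP : 1 <= dd e P.
  case: (ltrP 0 (dd e P)) => // hn; exfalso.
  have [hn'|hn'] : dd e P < 0 \/ dd e P = 0 by lia.
  - case: aPf => _ [x [HxP Hxf]].
    apply: (cone_free Hs HxP Hxf (k := e)); first by rewrite hPf.
      by rewrite detC; lia.
    lia.
  - case: (par_eta hn') => E; rewrite E in hPf.
      by move: hPf; lia.
    by move: hPf; rewrite det_negl; lia.
have hPM : dd e P < dd e f.
  rewrite lt_neqAle (Hm P) andbT; apply/eqP => E.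
  case: (next_ex Hs e) => u [_ hu].
  by case: (same_h hu hPf E) => h; rewrite h in M2.
have hNM : dd e N <= dd e f := Hm N.
have hb := rel3 (eta e) hPf hfN.
have b1 : dd P N = 1.
  move: hb hPM hNM hP hN M2; set b := dd P N; set M := dd e f.
  move=> hb *.
  have [b0|[b0|b0]] : b <= 0 \/ b = 1 \/ 2 <= b by lia.
  - by exfalso; nia.
  - by [].
  - by exfalso; nia.
exists f; split => //.
- by move=> E; move: M2; rewrite E det_self.
- by move=> E; move: M2; rewrite E He' det_negr det_self.
- exact: (blow Hs aPf afN hPf hfN b1).
Qed.

End Comb.

Arguments cone_free {R n eta kappa} Hs [i j k x].
Arguments adj_sym {R n eta kappa} [i j].
Arguments adj_det {R n eta kappa} Hs [i j].
Arguments next_ex {R n eta kappa} Hs i.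
Arguments prev_ex {R n eta kappa} Hs i.
Arguments eta_inj {R n eta kappa} Hs [i j].
Arguments next_uniq {R n eta kappa} Hs [i j j'].
Arguments prev_uniq {R n eta kappa} Hs [i j j'].
Arguments blow {R n eta kappa} Hs [f P N].
Arguments coord_det {u v} w z.
Arguments same_h {a b c d}.
Arguments rel3 {P f N} e.
Arguments coord_eq {u v w z}.
Arguments pos_comb_of {R x y z}.
Arguments par_eta {R n eta kappa} Hs [e k].
Arguments par_det {R n eta kappa} [i j x y u w].
Arguments upper {R n eta kappa} Hs [e e'].

Lemma trich (a b : int) : a < b \/ b < a \/ a = b.
Proof. lia. Qed.
Lemma sgn3 (a : int) : 0 < a \/ a = 0 \/ a < 0.
Proof. lia. Qed.
Lemma le0_cases (a : int) : a <= 0 -> a < 0 \/ a = 0.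
Proof. lia. Qed.
Lemma ge0_cases (a : int) : 0 <= a -> 0 < a \/ a = 0.
Proof. lia. Qed.
Lemma lt_or_ge1 (x : int) : 0 < 1 - x \/ 1 <= x.
Proof. lia. Qed.
Lemma gt1_or_eq1 (x : int) : 1 <= x -> 1 < x \/ x = 1.
Proof. lia. Qed.
Lemma b_one (b M x y : int) : - x + - y = b * - M -> 0 <= x -> x < M ->
  0 <= y -> y <= M -> 1 <= x + y -> b = 1.
Proof.
move=> hb h1 h2 h3 h4 h5.
have [b0|[b0|b0]] : b <= 0 \/ b = 1 \/ 2 <= b by lia.
- have : b * M <= 0 by apply: mulr_le0_ge0; lia.
  lia.
- by [].
- have : 2 * M <= b * M by apply: ler_wpM2r; lia.
  lia.
Qed.

Arguments le0_cases {a}.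
Arguments ge0_cases {a}.
Arguments gt1_or_eq1 {x}.
Arguments b_one {b M x y}.

Section Main.
Variables (R : realType) (n : nat) (eta : 'I_n -> int * int) (kappa : 'I_n -> R).
Hypothesis Hs : smooth_polygon eta kappa.
Hypothesis n5 : (4 < n)%N.
Local Notation dd i j := (det (eta i) (eta j)).

Lemma adj_cone i j : adjacent eta kappa i j -> dd i j = 1 ->
  forall k, 0 < dd i k -> 0 < dd k j -> False.
Proof.
move=> [_ [x [Hi Hj]]] h k h1 h2; apply: (cone_free Hs Hi Hj _ h1 h2).
by rewrite h.
Qed.

Arguments adj_cone [i j] _ _ k.

Lemma prim_coord e u k : dd e u = 1 -> dd e k = 0 -> dd k u = 1 \/ dd k u = -1.
Proof.
move=> hu h; have Ek := cramer (eta k) hu; rewrite h !mul0r !addr0 in Ek.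
have Hs' := Hs; case: Hs' => _ Hprim _ _ _.
exact: (Hprim k _ _ Ek).
Qed.

Lemma prim_coord2 e u k : dd e u = 1 -> dd k u = 0 -> dd e k = 1 \/ dd e k = -1.
Proof.
move=> hu h; have Ek := cramer (eta k) hu; rewrite h !mul0r !add0r in Ek.
have Hs' := Hs; case: Hs' => _ Hprim _ _ _.
exact: (Hprim k _ _ Ek).
Qed.

Arguments prim_coord [e u k].
Arguments prim_coord2 [e u k].

Lemma part_i e e' : parallel_edges eta kappa e e' ->
  exists f, [/\ f <> e, f <> e', ~ adjacent eta kappa e f & can_blow_down eta kappa f].
Proof.
case=> ee' [x [y [u0 [w0 [[Hx Hy xy] [Hu Hw uw] X]]]]].
have d0 := par_det Hx Hy xy Hu Hw uw X.
have He' : eta e' = negv (eta e).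
  case: (par_eta Hs d0) => // E; exfalso; apply: ee'; exact: (eta_inj Hs (esym E)).
have He : eta e = negv (eta e').
  by rewrite He' /negv; case: (eta e) => ? ? /=; rewrite !opprK.
have dee' k : dd e' k = - dd e k by rewrite He' det_negl.
have nadj f : (2 <= dd e f \/ 2 <= dd e' f) -> ~ adjacent eta kappa e f.
  move=> h /(adj_det Hs); rewrite dee' in h; lia.
case: (boolP [exists k, 2 <= dd e k]) => [/existsP [k hk]|hA].
  case: (upper Hs He' (ex_intro _ k hk)) => f [f1 f2 f3 f4].
  by exists f; split => //; apply: nadj; left.
case: (boolP [exists k, 2 <= dd e' k]) => [/existsP [k hk]|hB].
  case: (upper Hs He (ex_intro _ k hk)) => f [f1 f2 f3 f4].
  by exists f; split => //; apply: nadj; right.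
have hA' k : dd e k <= 1.
  move/existsPn: hA => /(_ k); rewrite -ltNge; lia.
have hB' k : - 1 <= dd e k.
  move/existsPn: hB => /(_ k); rewrite -ltNge dee'; lia.
case: (prev_ex Hs e') => w [awe' hwe'].
have hw : dd e w = 1 by move: hwe'; rewrite He' det_negr detC; lia.
case: (prev_ex Hs w) => P [aPw hPw].
have hrel := rel3 (eta e) hPw hwe'.
rewrite d0 addr0 hw mulr1 in hrel.
case: (eqVneq (dd e P) 1) => hP1.
  exists w; split.
  - by move=> E; move: hw; rewrite E det_self.
  - by move=> E; move: hw; rewrite E d0.
  - move=> aew; have := prev_uniq Hs aew aPw hw hPw => E.
    by move: hP1; rewrite -E det_self.
  - by apply: (blow Hs aPw awe' hPw hwe'); rewrite -hrel.
have hP0 : P = e.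
  have hle : dd e P <= 0 by have := hA' P; lia.
  have [hlt|heq] : dd e P < 0 \/ dd e P = 0 by lia.
    exfalso; apply: (adj_cone aPw hPw e); last by rewrite hw.
    by rewrite detC; lia.
  case: (par_eta Hs heq) => E; first exact: (eta_inj Hs E).
  exfalso; rewrite -He' in E; move: hPw; rewrite (eta_inj Hs E) dee' hw; lia.
subst P.
case: (next_ex Hs e') => v [ae'v he'v].
have hv : dd e v = -1 by move: he'v; rewrite dee'; lia.
case: (next_ex Hs v) => N [avN hvN].
have hrel2 := rel3 (eta e) he'v hvN.
rewrite d0 add0r hv mulrN1 in hrel2.
case: (eqVneq (dd e N) (-1)) => hN1.
  exists v; split.
  - by move=> E; move: hv; rewrite E det_self.
  - by move=> E; move: hv; rewrite E d0.
  - move=> aev; have hve : dd v e = 1 by rewrite detC hv.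
    have := next_uniq Hs (adj_sym aev) avN hve hvN => E.
    by move: hN1; rewrite -E det_self.
  - by apply: (blow Hs ae'v avN he'v hvN); lia.
have hN0 : N = e.
  have hge : 0 <= dd e N by have := hB' N; lia.
  have [hlt|heq] : 0 < dd e N \/ dd e N = 0 by lia.
    exfalso; apply: (adj_cone avN hvN e) => //.
    by rewrite detC hv.
  case: (par_eta Hs heq) => E; first exact: (eta_inj Hs E).
  exfalso; rewrite -He' in E; move: hvN; rewrite (eta_inj Hs E) detC he'v; lia.
subst N.
have hve : dd v e = 1 by rewrite detC hv.
have all k : k \in [:: e; e'; w; v].
  have h1 := hA' k; have h2 := hB' k.
  have [h|[h|h]] : dd e k = 0 \/ dd e k = 1 \/ dd e k = -1 by lia.
  - case: (par_eta Hs h) => E; first by rewrite (eta_inj Hs E) inE eqxx.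
    by rewrite -He' in E; rewrite (eta_inj Hs E) !inE eqxx orbT.
  - have [g|[g|g]] : 0 < dd w k \/ dd w k < 0 \/ dd w k = 0 by lia.
    + exfalso; apply: (adj_cone awe' hwe' k g); rewrite He' det_negr detC opprK; lia.
    + exfalso; apply: (adj_cone aPw hw k); first by lia.
      by rewrite detC; lia.
    + have E : k = w.
        apply: (eta_inj Hs); apply: (coord_eq hw); first by rewrite det_self detC g oppr0.
        by rewrite h hw.
      by rewrite E !inE eqxx !orbT.
  - have [g|[g|g]] : 0 < dd v k \/ dd v k < 0 \/ dd v k = 0 by lia.
    + exfalso; apply: (adj_cone avN hve k g); rewrite detC; lia.
    + exfalso; apply: (adj_cone ae'v he'v k); first by rewrite dee'; lia.
      by rewrite detC; lia.
    + have E : k = v.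
        apply: (eta_inj Hs); apply: (coord_eq hve); first by rewrite hve detC h opprK.
        by rewrite g det_self.
      by rewrite E !inE eqxx !orbT.
have [k hk] := @ex_not_in n [:: e; e'; w; v] n5.
by rewrite all in hk.
Qed.


Lemma core2 e e' e'' : adjacent eta kappa e e' -> adjacent eta kappa e' e'' ->
  dd e e' = 1 -> dd e' e'' = 1 -> dd e e'' <= 0 ->
  exists f, [/\ f <> e, f <> e', f <> e'' & can_blow_down eta kappa f].
Proof.
move=> aee' ae'e'' h1 h2 hB.
have cd a b : dd a b = dd a e' * dd e b - dd e a * dd b e' := coord_det (eta a) (eta b) h1.
have ceq a b : dd a e' = dd b e' -> dd e a = dd e b -> a = b.
  by move=> p q; apply: (eta_inj Hs); apply: (coord_eq h1 p q).
have pe'' : dd e'' e' = -1 by rewrite detC h2.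
have Cee' := adj_cone aee' h1.
have Ce'e'' := adj_cone ae'e'' h2.
have Hpos k : k != e -> k != e' -> k != e'' -> 0 < dd k e.
  move=> /eqP ke /eqP ke' /eqP ke''.
  rewrite detC; case: (ltrP (dd e k) 0) => hq; first by clear -hq; lia.
  exfalso.
  have cde'k : dd e' k = - dd k e' by rewrite cd det_self h1; ring.
  have cdke'' : dd k e'' = dd k e' * dd e e'' + dd e k by rewrite cd pe''; ring.
  have [qp|q0] := ge0_cases hq.
  - have [pp|[p0|pn]] := sgn3 (dd k e').
    + exact: (Cee' k qp pp).
    + case: (prim_coord2 h1 p0) => hq1; last by clear -hq1 qp; lia.
      by apply: ke'; apply: ceq; rewrite ?p0 ?det_self ?hq1 ?h1.
    + apply: (Ce'e'' k); first by rewrite cde'k; clear -pn; lia.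
      have : 0 <= dd k e' * dd e e'' by apply: mulr_le0; [clear -pn; lia | exact: hB].
      by rewrite cdke'' => hh; clear -hh qp; lia.
  - case: (prim_coord h1 q0) => hp1.
      by apply: ke; apply: ceq; rewrite ?hp1 ?h1 ?q0 ?det_self.
    have [Bn|B0] := le0_cases hB.
      apply: (Ce'e'' k); first by rewrite cde'k hp1.
      by rewrite cdke'' hp1 q0; clear -Bn; lia.
    by apply: ke''; apply: ceq; rewrite ?hp1 ?pe'' ?q0 ?B0.
pose pS k := k \notin [:: e; e'; e''].
have inS k : pS k -> [/\ k != e, k != e' & k != e''].
  by rewrite /pS !inE !negb_or => /and3P.
have [k0 hk0] := @ex_not_in n [:: e; e'; e''] (ltn_trans (isT : (3 < 4)%N) n5).
case: (@arg_maxP _ int _ k0 pS (fun k => dd k e) hk0) => f fS Hmax.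
have Hm j : pS j -> dd j e <= dd f e := fun h => Hmax j h.
have [fe fe' fe''] := inS f fS.
have M1 : 0 < dd f e := Hpos f fe fe' fe''.
have fne a : f <> a -> False -> True by [].
case: (ltrP 1 (dd f e)) => hM.
  case: (prev_ex Hs f) => P [aPf hPf].
  case: (next_ex Hs f) => N [afN hfN].
  have Pe : P != e.
    apply/eqP => E; rewrite E in aPf hPf; move/eqP: fe'; apply.
    apply: esym; exact: (next_uniq Hs aee' aPf h1 hPf).
  have Pe' : P != e'.
    apply/eqP => E; rewrite E in aPf hPf; move/eqP: fe''; apply.
    apply: esym; exact: (next_uniq Hs ae'e'' aPf h2 hPf).
  have Ne' : N != e'.
    apply/eqP => E; rewrite E in afN hfN; move/eqP: fe; apply.
    apply: esym; exact: (prev_uniq Hs aee' afN h1 hfN).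
  have Ne'' : N != e''.
    apply/eqP => E; rewrite E in afN hfN; move/eqP: fe'; apply.
    apply: esym; exact: (prev_uniq Hs ae'e'' afN h2 hfN).
  have hrel := rel3 (eta e) hPf hfN.
  rewrite (detC (eta e) (eta P)) (detC (eta e) (eta N)) (detC (eta e) (eta f)) in hrel.
  have hNb : 0 <= dd N e /\ dd N e <= dd f e.
    case: (eqVneq N e) => [->|Ne]; first by rewrite det_self; clear -hM; lia.
    have NS : pS N by rewrite /pS !inE !negb_or Ne Ne' Ne''.
    by split; [apply: ltW; apply: Hpos | apply: Hm].
  have hPb : 0 <= dd P e /\ dd P e < dd f e.
    case: (eqVneq P e'') => [E|Pe''].
      rewrite E in hPf *.
      have : dd e'' f = - dd e e'' * dd f e' + dd f e by rewrite cd pe'' (detC (eta e) (eta f)); ring.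
      rewrite hPf (detC (eta e'') (eta e)) => hh; split; first by clear -hB; lia.
      have [Bn|B0] := le0_cases hB.
        have pn : dd f e' < 0.
          case: (ltrP (dd f e') 0) => // hp.
          have : 0 <= (- dd e e'') * dd f e' by apply: mulr_ge0; [clear -Bn; lia | exact: hp].
          by move=> h0; exfalso; clear -h0 hh hM; lia.
        have : 0 <= (- dd e e'') * (- dd f e' - 1) by apply: mulr_ge0; clear -Bn pn; lia.
        by move=> h0; clear -h0 hh hM; lia.
      by clear -B0 hM; lia.
    have PS : pS P by rewrite /pS !inE !negb_or Pe Pe' Pe''.
    split; first by apply: ltW; apply: Hpos.
    rewrite lt_neqAle Hm // andbT; apply/eqP => E.
    have E' : dd e P = dd e f by rewrite (detC (eta e)) E -detC.
    by case: (same_h h1 hPf E') => hh; move: hM; rewrite detC hh.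
  have sum1 : 1 <= dd P e + dd N e.
    case: (eqVneq N e) => [E|Ne].
      by rewrite E in hfN; move: hM; rewrite hfN.
    have NS : pS N by rewrite /pS !inE !negb_or Ne Ne' Ne''.
    have := Hpos N Ne Ne' Ne'' => hh; case: hPb => hp1 _; clear -hh hp1; lia.
  have b1 : dd P N = 1.
    case: hNb => n1 n2; case: hPb => p1 p2.
    exact: (b_one hrel p1 p2 n1 n2 sum1).
  exists f; split; [by move=> E; move: fe; rewrite E eqxx | by move=> E; move: fe'; rewrite E eqxx | by move=> E; move: fe''; rewrite E eqxx |].
  exact: (blow Hs aPf afN hPf hfN b1).
have hall k : pS k -> dd k e = 1.
  move=> kS; have [k1 k2 k3] := inS k kS; have a1 := Hpos k k1 k2 k3; have a2 := Hm k kS; clear -a1 a2 hM; lia.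
case: (prev_ex Hs e) => g [age hge].
have ge : g != e by apply/eqP => E; move: hge; rewrite E det_self.
have ge' : g != e' by apply/eqP => E; move: hge; rewrite E detC h1.
have [k1 hk1] := @ex_not_in n [:: e; e'; e''; g] n5.
have k1S : pS k1 by move: hk1; rewrite /pS !inE !negb_or => /and4P [-> -> -> _].
have k1g : k1 != g by move: hk1; rewrite !inE !negb_or => /and4P [_ _ _ ->].
have [k1e k1e' k1e''] := inS k1 k1S.
have hk1e := hall k1 k1S.
have cde'k : dd e' k1 = - dd k1 e' by rewrite cd det_self h1; ring.
have cdke'' : dd k1 e'' = dd k1 e' * dd e e'' - dd e k1 * (-1) by rewrite cd pe''.
have qk : dd e k1 = -1 by rewrite detC hk1e.
case: (eqVneq g e'') => [E|ge''].
  rewrite E in age hge.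
  have B1 : dd e e'' = -1 by rewrite detC hge.
  have cde''k : dd e'' k1 = 1 + dd k1 e' by rewrite cd pe'' B1 qk; ring.
  exfalso.
  have [p1|[p1|p1]] := trich (-1) (dd k1 e').
  - apply: (adj_cone age hge k1); first by rewrite cde''k; clear -p1; lia.
    by rewrite hk1e.
  - apply: (Ce'e'' k1); first by rewrite cde'k; clear -p1; lia.
    by rewrite cdke'' qk B1; clear -p1; lia.
  - by move/eqP: k1e''; apply; apply: ceq; rewrite -?p1 ?pe'' ?qk ?B1.
have gS : pS g by rewrite /pS !inE !negb_or ge ge' ge''.
case: (prev_ex Hs g) => P [aPg hPg].
have Pe : P != e.
  apply/eqP => E; rewrite E in aPg hPg; move/eqP: ge'; apply; apply: esym.
  exact: (next_uniq Hs aee' aPg h1 hPg).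
have Pe' : P != e'.
  apply/eqP => E; rewrite E in aPg hPg; move/eqP: ge''; apply; apply: esym.
  exact: (next_uniq Hs ae'e'' aPg h2 hPg).
case: (eqVneq P e'') => [E|Pe''].
  rewrite E in aPg hPg.
  exfalso.
  have qg : dd e g = -1 by rewrite detC hge.
  have hgg : dd e'' g = 1 - dd e e'' * dd g e' by rewrite cd pe'' qg; ring.
  rewrite hPg in hgg.
  have cdgk : dd g k1 = dd k1 e' - dd g e' by rewrite cd qg qk; ring.
  have cde''k : dd e'' k1 = 1 - dd e e'' * dd k1 e' by rewrite cd pe'' qk; ring.
  have cdkg : dd k1 g = dd g e' - dd k1 e' by rewrite cd qg qk; ring.
  have [p1|[p1|p1]] := trich (dd g e') (dd k1 e').
  - by apply: (adj_cone age hge k1); [rewrite cdgk; clear -p1; lia | rewrite hk1e].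
  - have [c1|c1] := lt_or_ge1 (dd e e'' * dd k1 e').
      by apply: (adj_cone aPg hPg k1); [rewrite cde''k | rewrite cdkg; clear -p1; lia].
    have pneg : dd k1 e' < 0.
      case: (ltrP (dd k1 e') 0) => // hp.
      have : dd e e'' * dd k1 e' <= 0 by apply: mulr_le0_ge0.
      by move=> hh; clear -hh c1; lia.
    have [c2|c2] := gt1_or_eq1 c1.
      apply: (Ce'e'' k1); first by rewrite cde'k; clear -pneg; lia.
      by rewrite cdke'' qk; clear -c2; lia.
    have hp' : dd k1 e' = -1.
      by case: (unit_int _ _ c2) => hp //; exfalso; clear -hp pneg; lia.
    rewrite hp' in c2; have hB' : dd e e'' = -1 by clear -c2; lia.
    by move/eqP: k1e''; apply; apply: ceq; rewrite ?hp' ?pe'' ?qk ?hB'.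
  - by move/eqP: k1g; apply; apply: ceq; rewrite ?p1 ?qk ?qg.
have PS : pS P by rewrite /pS !inE !negb_or Pe Pe' Pe''.
have hrel := rel3 (eta e) hPg hge.
rewrite det_self addr0 (detC (eta e) (eta P)) (detC (eta e) (eta g)) (hall P PS) (hall g gS) in hrel.
exists g; split; [by move=> E; move: ge; rewrite E eqxx | by move=> E; move: ge'; rewrite E eqxx | by move=> E; move: ge''; rewrite E eqxx |].
by apply: (blow Hs aPg age hPg hge); exact: hall P PS.
Qed.

End Main.
Arguments adj_sym {R n eta kappa} [i j].
Arguments adj_det {R n eta kappa} Hs [i j].
Arguments next_uniq {R n eta kappa} Hs [i j j'].
Arguments prev_uniq {R n eta kappa} Hs [i j j'].
Arguments pos_comb_of {R x y z}.

Theorem lemma2p46 (R : realType) (n : nat)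
  (eta : 'I_n -> int * int) (kappa : 'I_n -> R) :
  smooth_polygon eta kappa -> (4 < n)%N ->
  (forall e e' : 'I_n, parallel_edges eta kappa e e' ->
     exists f : 'I_n, [/\ f <> e, f <> e', ~ adjacent eta kappa e f &
                          can_blow_down eta kappa f]) /\
  (forall e e' e'' : 'I_n,
     adjacent eta kappa e e' -> adjacent eta kappa e' e'' -> e <> e'' ->
     ~ pos_comb R (eta e') (eta e) (eta e'') ->
     exists f : 'I_n, [/\ f <> e, f <> e', f <> e'' & can_blow_down eta kappa f]).
Proof.
move=> Hs n5; split.
  by move=> e e' hp; exact: (@part_i R n eta kappa Hs n5 e e' hp).
move=> e e' e'' a1 a2 ne npc.
case: (adj_det Hs a1) => h1.
  have h2 : det (eta e') (eta e'') = 1.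
    case: (adj_det Hs a2) => // h2; exfalso; apply: ne; apply: esym.
    apply: (prev_uniq Hs (adj_sym a2) a1 _ h1); by rewrite detC h2.
  have hB : det (eta e) (eta e'') <= 0.
    case: (lerP (det (eta e) (eta e'')) 0) => // hb; exfalso; apply: npc.
    have hb' : 1 <= det (eta e) (eta e'') by clear -hb; lia.
    exact: (pos_comb_of h1 h2 hb').1.
  exact: (@core2 R n eta kappa Hs n5 _ _ _ a1 a2 h1 h2 hB).
have he'e : det (eta e') (eta e) = 1 by rewrite detC h1.
have h2 : det (eta e'') (eta e') = 1.
  case: (adj_det Hs a2) => h2; last by rewrite detC h2.
  exfalso; apply: ne; exact: (next_uniq Hs (adj_sym a1) a2 he'e h2).
have hB : det (eta e'') (eta e) <= 0.
  case: (lerP (det (eta e'') (eta e)) 0) => // hb; exfalso; apply: npc.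
  have hb' : 1 <= det (eta e'') (eta e) by clear -hb; lia.
  exact: (pos_comb_of h2 he'e hb').2.
case: (@core2 R n eta kappa Hs n5 _ _ _ (adj_sym a2) (adj_sym a1) h2 he'e hB) => f [f1 f2 f3 f4].
by exists f; split.
Qed.
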